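(* Let $X$ be an Alexandroff space, $Y$ a topological space, and $f:X\to Y$ an arbitrary map. The following are equivalent: (i) $f$ has closed graph; (ii) for every connected component $C$ of $X$, $f(C)$ is a singleton closed subset of $Y$; (iii) for every $x\in X$, $f([x]_{\Re_X})$ is a singleton closed subset of $Y$. Moreover, if these hold then $f$ is continuous.
   Context: For a map $f:X\to Y$ its graph is $G_f=\{(x,f(x)):x\in X\}$; $f$ has closed graph if $G_f$ is closed in $X\times Y$ (product topology). A topological space $X$ is an Alexandroff space if the intersection of every nonempty family of open subsets of $X$ is open; equivalently, every point $a\in X$ has a smallest open neighbourhood, denoted $V_a$. On an Alexandroff space $X$ define the relation $\Re_X$ by: $(x,y)\in\Re_X$ iff there exist $x=x_1,x_2,\ldots,x_n=y$ in $X$ with $V_{x_i}\cap V_{x_{i+1}}\neq\emptyset$ for all $i\in\{1,\ldots,n-1\}$. This is an equivalence relation, and $[x]_{\Re_X}=\{y\in X:(x,y)\in\Re_X\}$ denotes the equivalence class of $x$. *)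

(* Defs.v *)
From HB Require Import structures.
From mathcomp Require Import all_boot all_order all_algebra.
From mathcomp Require Import all_classical all_reals all_analysis.
From Stdlib Require Import Relations.
Set Implicit Arguments. Unset Strict Implicit. Unset Printing Implicit Defensive.
Local Open Scope classical_set_scope.

Definition graph_of {X Y : Type} (f : X -> Y) : set (X * Y) :=
  [set p | p.2 = f p.1].

Definition closed_graph {X Y : topologicalType} (f : X -> Y) : Prop :=
  closed (graph_of f).

Definition alexandroff (X : topologicalType) : Prop :=
  forall F : set (set X), F !=set0 -> (forall U, F U -> open U) ->
    open (\bigcap_(U in F) U).

(* V_a : the intersection of all open neighbourhoods of a (the smallest open
   neighbourhood of a when X is Alexandroff). *)
Definition minnbhd {X : topologicalType} (a : X) : set X :=
  \bigcap_(U in [set U : set X | open U /\ U a]) U.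

Definition minnbhd_meet {X : topologicalType} (x y : X) : Prop :=
  minnbhd x `&` minnbhd y !=set0.

(* Re_X: x ~ y iff there is a finite chain x = x_1, ..., x_n = y with
   consecutive smallest neighbourhoods meeting (reflexive-transitive closure). *)
Definition ReX {X : topologicalType} (x y : X) : Prop :=
  clos_refl_trans X minnbhd_meet x y.

Definition ReX_class {X : topologicalType} (x : X) : set X := [set y | ReX x y].

(* Main.v *)
Require Import Defs.
From HB Require Import structures.
From mathcomp Require Import all_boot all_order all_algebra.
From mathcomp Require Import all_classical all_reals all_analysis.
From Stdlib Require Import Relations.
Set Implicit Arguments. Unset Strict Implicit.
Local Open Scope classical_set_scope.

Section Aux.
Variable X : topologicalType.

Lemma minnbhd_refl (x : X) : minnbhd x x.
Proof. by move=> U []. Qed.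

Lemma minnbhd_sub (x : X) U : open U -> U x -> minnbhd x `<=` U.
Proof. by move=> oU Ux y; apply; split. Qed.

Lemma minnbhd_nbhs (x : X) P : nbhs x P -> minnbhd x `<=` P.
Proof.
rewrite nbhsE => -[B [oB Bx] BP] y /(minnbhd_sub oB Bx); exact: BP.
Qed.

Lemma minnbhd_open (aX : alexandroff X) (x : X) : open (minnbhd x).
Proof.
apply: aX; first by exists setT; split => //; exact: openT.
by move=> U [].
Qed.

Lemma minnbhd_closed (x y : X) D : minnbhd x y -> closed D -> D y -> D x.
Proof.
move=> Vy cD Dy; apply: contrapT => nDx.
exact: (minnbhd_sub (closed_openC cD) nDx Vy).
Qed.

Lemma minnbhd_connected (x : X) : connected (minnbhd x).
Proof.
move=> B [b Bb] [C oC BE] [D cD BD].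
have Bx : B x.
  rewrite BD; split; first exact: minnbhd_refl.
  have : (minnbhd x `&` D) b by rewrite -BD.
  by case=> Vb Db; exact: (minnbhd_closed Vb cD Db).
have : (minnbhd x `&` C) x by rewrite -BE.
case=> _ Cx; rewrite BE; apply/seteqP; split => y; first by case.
by move=> Vy; split => //; exact: (minnbhd_sub oC Cx Vy).
Qed.

Lemma ReX_open (aX : alexandroff X) (x : X) : open (ReX_class x).
Proof.
rewrite openE => y Rxy; rewrite /interior.
apply: (@filterS _ _ _ (minnbhd y)).
  move=> z Vz; apply: rt_trans Rxy _; apply: rt_step.
  by exists z; split => //; exact: minnbhd_refl.
by apply: open_nbhs_nbhs; split; [exact: minnbhd_open|exact: minnbhd_refl].
Qed.

Lemma ReX_closed (aX : alexandroff X) (x : X) : closed (ReX_class x).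
Proof.
rewrite -[ReX_class x]setCK; apply: open_closedC.
rewrite openE => y nR; rewrite /interior.
apply: (@filterS _ _ _ (minnbhd y)).
  move=> z Vz Rz; apply: nR; apply: rt_trans Rz _; apply: rt_step.
  by exists z; split => //; exact: minnbhd_refl.
by apply: open_nbhs_nbhs; split; [exact: minnbhd_open|exact: minnbhd_refl].
Qed.

Lemma comp_minnbhd (a : X) : minnbhd a `<=` connected_component setT a.
Proof.
apply: connected_component_max; [exact: minnbhd_refl| by []| exact: minnbhd_connected].
Qed.

Lemma ReX_comp (a b : X) : ReX a b -> connected_component setT a b.
Proof.
elim.
- move=> u v [z [Vu Vv]].
  apply: connected_component_trans (comp_minnbhd Vu) _.
  exact/connected_component_sym/comp_minnbhd.
- by move=> u; exact: connected_component_refl.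
- by move=> u v w _ H1 _ H2; exact: connected_component_trans H1 H2.
Qed.

Lemma comp_eq (aX : alexandroff X) (x : X) :
  connected_component setT x = ReX_class x.
Proof.
apply/seteqP; split; last by move=> y; exact: ReX_comp.
rewrite -(@component_connected _ setT x (connected_component setT x `&` ReX_class x)).
  by move=> y [].
- exists x; split; first exact: connected_component_refl.
  exact: rt_refl.
- by exists (ReX_class x) => //; exact: ReX_open.
- by exists (ReX_class x) => //; exact: ReX_closed.
Qed.

End Aux.

Section Main.
Variables (X Y : topologicalType) (f : X -> Y).

Lemma cg_const (cg : closed_graph f) (x y : X) : minnbhd x y -> f x = f y.
Proof.
move=> Vxy; apply: esym; apply: (cg (x, f y)).
move=> B [[P Q] /= [nP nQ] PQB].
exists (y, f y); split => //; apply: PQB; split => /=.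
  exact: (minnbhd_nbhs nP Vxy).
exact: nbhs_singleton nQ.
Qed.

Lemma cg_ReX (cg : closed_graph f) (a b : X) : ReX a b -> f a = f b.
Proof.
elim.
- move=> u v [z [Vu Vv]].
  by rewrite (cg_const cg Vu) (cg_const cg Vv).
- by [].
- by move=> u v w _ -> _ ->.
Qed.

Lemma cg_pt (cg : closed_graph f) (x : X) : closed [set f x].
Proof.
move=> w cw; apply: (cg (x, w)).
move=> B [[P Q] /= [nP nQ] PQB].
exists (x, f x); split => //; apply: PQB; split => /=.
  exact: nbhs_singleton nP.
by case: (cw Q nQ) => z [-> Qz].
Qed.

Lemma H3_facts (H3 : forall x : X, exists y : Y,
        f @` ReX_class x = [set y] /\ closed [set y]) (x a : X) :
  (ReX x a -> f a = f x) /\ closed [set f x].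
Proof.
have [y [E cl]] := H3 x.
have fx : f x = y.
  have : (f @` ReX_class x) (f x) by exists x => //; exact: rt_refl.
  by rewrite E.
split; last by rewrite fx.
move=> Ra; have : (f @` ReX_class x) (f a) by exists a.
by rewrite E fx.
Qed.

End Main.

Theorem theorem3p5 (X Y : topologicalType) (f : X -> Y) :
  alexandroff X ->
  (closed_graph f <->
     (forall x : X, exists y : Y,
        f @` connected_component [set: X] x = [set y] /\ closed [set y])) /\
  ((forall x : X, exists y : Y,
        f @` connected_component [set: X] x = [set y] /\ closed [set y]) <->
   (forall x : X, exists y : Y,
        f @` ReX_class x = [set y] /\ closed [set y])) /\
  (closed_graph f -> continuous f).
Proof.
move=> aX.
have E23 : (forall x : X, exists y : Y,
        f @` connected_component [set: X] x = [set y] /\ closed [set y]) <->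
   (forall x : X, exists y : Y,
        f @` ReX_class x = [set y] /\ closed [set y]).
  by split=> H x; [rewrite -(comp_eq aX)|rewrite (comp_eq aX)]; exact: H.
have I13 : closed_graph f -> (forall x : X, exists y : Y,
        f @` ReX_class x = [set y] /\ closed [set y]).
  move=> cg x; exists (f x); split; last exact: cg_pt.
  apply/seteqP; split => z.
    by case=> a Ra <-; rewrite /= (cg_ReX cg Ra).
  by move=> /= ->; exists x => //; exact: rt_refl.
have I31 : (forall x : X, exists y : Y,
        f @` ReX_class x = [set y] /\ closed [set y]) -> closed_graph f.
  move=> H3 [x w] cw; rewrite /graph_of /=.
  have [Hc cl] := H3_facts H3 x x.
  apply: contrapT => nw.
  have nB : nbhs (x, w) (ReX_class x `*` ~` [set f x]).
    exists (ReX_class x, ~` [set f x]) => //; split => /=.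
      by apply: open_nbhs_nbhs; split; [exact: ReX_open|exact: rt_refl].
    by apply: open_nbhs_nbhs; split; [exact: closed_openC|].
  have [[a b] [/= gb [/= Ra Wb]]] := cw _ nB.
  have [Ha _] := H3_facts H3 x a.
  move: gb Wb; rewrite /graph_of /= => -> Wb; apply: Wb; exact: Ha.
split.
  split=> H; [apply/E23; exact: I13 | apply: I31; exact/E23].

split; first exact: E23.
move=> cg x Q nQ.
suff : nbhs x (f @^-1` Q) by [].
have H3 := I13 cg.
apply: (@filterS _ _ _ (minnbhd x)).
  move=> a Va; have [Ha _] := H3_facts H3 x a.
  change (Q (f a)); rewrite (Ha _); first exact: nbhs_singleton nQ.
  apply: rt_step; exists a; split => //; exact: minnbhd_refl.
by apply: open_nbhs_nbhs; split; [exact: minnbhd_open|exact: minnbhd_refl].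
Qed.
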